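(* Let $k$ be a field and let $H$ be a numerical semigroup minimally generated by $n<a_2<\cdots<a_n$ with $n\ge 3$ (so the number of minimal generators equals the smallest generator $n$). Then $k[[H]]$ has minimal canonical conductor if and only if $a_n=a_{n-1}+1$.
   Context: A numerical semigroup is an additive submonoid $H\subseteq\mathbb{N}$ with $\mathbb{N}\setminus H$ finite. $k[[H]]$ is the subring of $k[[t]]$ of power series supported on $H$; it is a one-dimensional analytically unramified local domain with integral closure $\overline{R}=k[[t]]$ and it is singular when $H\ne\mathbb{N}$. A one-dimensional singular analytically unramified local domain $R$ with fraction field $Q(R)$ and canonical ideal $\omega$ has minimal canonical conductor if $b(\omega)=\mathfrak{c}(R)$, where $B(\omega)=\bigcup_{m\ge0}(\omega^m:\omega^m)$ with $\omega^m:\omega^m=\{x\in Q(R): x\omega^m\subseteq\omega^m\}$, $b(\omega)=\{x\in B(\omega): xB(\omega)\subseteq R\}$, and $\mathfrak{c}(R)=\{x\in\overline{R}: x\overline{R}\subseteq R\}$; equivalently, $B(\omega)=\overline{R}$. *)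

(* Defs.v *)
From HB Require Import structures.
From mathcomp Require Import all_boot all_order all_algebra.
Set Implicit Arguments. Unset Strict Implicit. Unset Printing Implicit Defensive.
Import Order.TTheory GRing.Theory Num.Theory.
Local Open Scope ring_scope.

(* A Laurent series is a coefficient function int -> k vanishing below
   some bound [lo].  Equality of series is coefficientwise; all the
   predicates below only look at coefficients. *)
Record LS (k : fieldType) := MkLS {
  lo : int;
  co : int -> k;
  co_lo : forall z : int, z < lo -> co z = 0 }.

Section LaurentOps.
Variable k : fieldType.

Definition ls_zero : LS k := @MkLS k 0 (fun _ => 0) (fun _ _ => erefl).

Definition addco (f g : LS k) (z : int) : k :=
  if z < Num.min (lo f) (lo g) then 0 else co f z + co g z.

Lemma addco_lo (f g : LS k) z : z < Num.min (lo f) (lo g) -> addco f g z = 0.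
Proof. by rewrite /addco => ->. Qed.

Definition ls_add (f g : LS k) : LS k := MkLS (@addco_lo f g).

(* Cauchy product: coefficient of t^z is sum_{lo f <= i <= z - lo g} f_i g_{z-i} *)
Definition mulco (f g : LS k) (z : int) : k :=
  if z < lo f + lo g then 0 else
  \sum_(j < (absz (z - lo f - lo g)%R).+1)
     co f (lo f + (nat_of_ord j)%:Z) * co g (z - lo f - (nat_of_ord j)%:Z).

Lemma mulco_lo (f g : LS k) z : z < lo f + lo g -> mulco f g z = 0.
Proof. by rewrite /mulco => ->. Qed.

Definition ls_mul (f g : LS k) : LS k := MkLS (@mulco_lo f g).

Definition ls_sum (s : seq (LS k * LS k)) : LS k :=
  foldr ls_add ls_zero (map (fun p => ls_mul p.1 p.2) s).

Definition ls_eq (f g : LS k) : Prop := forall z, co f z = co g z.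

End LaurentOps.

Definition frobenius (H : nat -> Prop) (F : nat) : Prop :=
  ~ H F /\ forall x : nat, (F < x)%N -> H x.

Section SemigroupRing.
Variables (k : fieldType) (H : nat -> Prop).

Definition inR (f : LS k) : Prop :=
  forall z : int, co f z <> 0 -> exists h : nat, z = h%:Z /\ H h.

(* integral closure k[[t]] *)
Definition inRbar (f : LS k) : Prop :=
  forall z : int, co f z <> 0 -> 0 <= z.

Definition in_conductor (x : LS k) : Prop :=
  inRbar x /\ forall y, inRbar y -> inR (ls_mul x y).

Variable F : nat.

(* standard canonical semigroup ideal K = { z : F - z ∉ H } *)
Definition inK (z : int) : Prop :=
  ~ exists h : nat, F%:Z - z = h%:Z /\ H h.

Definition inOmega (f : LS k) : Prop :=
  forall z : int, co f z <> 0 -> inK z.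

Definition in_prod (I J : LS k -> Prop) (z : LS k) : Prop :=
  exists s : seq (LS k * LS k),
    foldr (fun p P => (I p.1 /\ J p.2) /\ P) True s /\ ls_eq z (ls_sum s).

Fixpoint in_pow (m : nat) : LS k -> Prop :=
  match m with
  | 0 => inR
  | m'.+1 => in_prod (in_pow m') inOmega
  end.

Definition inB (x : LS k) : Prop :=
  exists m : nat, forall y, in_pow m y -> in_pow m (ls_mul x y).

Definition in_b (x : LS k) : Prop :=
  inB x /\ forall y, inB y -> inR (ls_mul x y).

End SemigroupRing.

Definition min_can_conductor (k : fieldType) (H : nat -> Prop) : Prop :=
  forall F : nat, frobenius H F ->
    forall x : LS k, in_b H F x <-> in_conductor H x.

(* Main.v *)
Require Import Defs.
From HB Require Import structures.
From mathcomp Require Import all_boot all_order all_algebra zify.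
Set Implicit Arguments. Unset Strict Implicit. Unset Printing Implicit Defensive.
Import Order.TTheory GRing.Theory Num.Theory.

Section Ser.
Local Open Scope ring_scope.
Variable k : fieldType.

Lemma co_add (f g : LS k) z : co (ls_add f g) z = co f z + co g z.
Proof.
rewrite /= /addco; case: ifP => // hz.
have h1 : z < lo f by move: hz; rewrite lt_min => /andP[].
have h2 : z < lo g by move: hz; rewrite lt_min => /andP[].
by rewrite !co_lo // addr0.
Qed.

Lemma mono_lo (c : k) (b z : int) : z < b -> (if z == b then c else 0) = 0.
Proof. by move=> h; rewrite lt_eqF. Qed.

Definition mono (c : k) (b : int) : LS k := MkLS (@mono_lo c b).

Lemma co_mono c b z : co (mono c b) z = if z == b then c else 0.
Proof. by []. Qed.

Lemma co_mul_mono (f : LS k) c b z :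
  co (ls_mul f (mono c b)) z = co f (z - b) * c.
Proof.
rewrite /= /mulco /=; case: ifP => hz.
  by rewrite co_lo ?mul0r //; lia.
set N := absz _.
have hN : N%:Z = z - lo f - b by rewrite /N; lia.
rewrite big_ord_recr /= big1 ?add0r.
  have -> : z - lo f - N%:Z = b by rewrite hN; lia.
  rewrite eqxx; congr (co f _ * _); rewrite hN; lia.
move=> j _; have hj := ltn_ord j.
have -> : (z - lo f - (nat_of_ord (widen_ord (leqnSn N) j))%:Z == b) = false.
  apply/negbTE; apply/eqP => /= e.
  have : (j < N)%N by []. lia.
by rewrite mulr0.
Qed.

Lemma co_mul_supp (f g : LS k) z : co (ls_mul f g) z != 0 ->
  exists i j, z = i + j /\ co f i != 0 /\ co g j != 0.
Proof.
rewrite /= /mulco; case: ifP => hz; first by rewrite eqxx.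
set N := absz _.
pose T := fun j : 'I_N.+1 => co f (lo f + (nat_of_ord j)%:Z) * co g (z - lo f - (nat_of_ord j)%:Z).
case: (pickP (fun j : 'I_N.+1 => T j != 0)) => [j Hj | Hn].
  move: Hj; rewrite /T => Hj _.
  exists (lo f + (nat_of_ord j)%:Z), (z - lo f - (nat_of_ord j)%:Z).
  split; first lia.
  by move: Hj; rewrite mulf_eq0 negb_or => /andP.
rewrite big1 ?eqxx // => j _; apply/eqP; move: (Hn j) => /= /negbFE.
by [].
Qed.

End Ser.

Section Gen.
Local Open Scope ring_scope.
Variables (k : fieldType) (H : nat -> Prop) (F : nat).

Lemma sum_supp (P : int -> Prop) (Q1 Q2 : LS k -> Prop) s :
  (forall a b, P a -> P b -> P (a + b)) ->
  (forall f z, Q1 f -> co f z != 0 -> P z) ->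
  (forall f z, Q2 f -> co f z != 0 -> P z) ->
  foldr (fun p P => (Q1 p.1 /\ Q2 p.2) /\ P) True s ->
  forall z, co (ls_sum s) z != 0 -> P z.
Proof.
move=> Padd h1 h2; elim: s => [|[f g] s IH]; first by move=> _ z; rewrite /= eqxx.
case=> [[q1 q2] hs] z.
have -> : ls_sum ((f, g) :: s) = ls_add (ls_mul f g) (ls_sum s) by [].
rewrite co_add.
case: (eqVneq (co (ls_mul f g) z) 0) => [-> | hne].
  by rewrite add0r; apply: IH.
move=> _; have [i [j [-> [hi hj]]]] := co_mul_supp hne.
by apply: Padd; [apply: (h1 f) | apply: (h2 g)].
Qed.

Lemma pow_supp (P : int -> Prop) :
  (forall a b, P a -> P b -> P (a + b)) ->
  (forall h, H h -> P h%:Z) ->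
  (forall z, inK H F z -> P z) ->
  forall m (f : LS k) z, in_pow H F m f -> co f z != 0 -> P z.
Proof.
move=> Padd PH PK; elim => [|m IH] f z /=.
  by move=> hR /eqP/hR [h [-> ?]]; apply: PH.
move=> [s [hs he]]; rewrite he; apply: (sum_supp Padd _ _ hs).
  by move=> g w hg /eqP hw; apply: IH hg _ ; apply/eqP.
by move=> g w hg /eqP/hg; apply: PK.
Qed.

Definition one := mono (1 : k) 0.

Lemma mul_one (f : LS k) z : co (ls_mul f one) z = co f z.
Proof. by rewrite co_mul_mono subr0 mulr1. Qed.

Lemma ls_sum1 (f g : LS k) z : co (ls_sum [:: (f, g)]) z = co (ls_mul f g) z.
Proof.
have -> : ls_sum [:: (f, g)] = ls_add (ls_mul f g) (ls_zero k) by [].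
by rewrite co_add /= addr0.
Qed.

Hypothesis H0 : H 0%N.
Hypothesis HF : ~ H F.

Lemma one_omega : inOmega H F one.
Proof.
move=> z; rewrite co_mono; case: eqP => // -> _ [h [e hh]].
have : h = F by move: e; rewrite subr0 => /eqP; rewrite eqz_nat => /eqP.
by move=> ehF; apply: HF; rewrite -ehF.
Qed.

Lemma one_pow m : in_pow H F m one.
Proof.
elim: m => [|m IH] /=.
  by move=> z; rewrite co_mono; case: eqP => // -> _; exists 0%N.
exists [:: (one, one)]; split; first by split => //; split => //; apply: one_omega.
by move=> z; rewrite ls_sum1 mul_one.
Qed.

Lemma B_supp (P : int -> Prop) :
  (forall a b, P a -> P b -> P (a + b)) ->
  (forall h, H h -> P h%:Z) ->
  (forall z, inK H F z -> P z) ->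
  forall (y : LS k) z, inB H F y -> co y z != 0 -> P z.
Proof.
move=> Padd PH PK y z [m hm]; rewrite -mul_one => hz.
exact: (pow_supp Padd PH PK (hm _ (one_pow m)) hz).
Qed.

Hypothesis Hfrob : forall x : nat, (F < x)%N -> H x.
Hypothesis K1 : inK H F 1.

Definition t1 := mono (1 : k) 1.

Lemma t1_omega : inOmega H F t1.
Proof. by move=> z; rewrite co_mono; case: eqP => // -> _. Qed.

Lemma drop_lo (f : LS k) (p : int) z : z < lo f -> (if z == p then 0 else co f z) = 0.
Proof. by move=> h; case: ifP => //; rewrite co_lo. Qed.

Lemma build m (f : LS k) : (forall z, co f z != 0 -> (0 <= z <= m%:Z) \/ F%:Z < z) ->
  in_pow H F m f.
Proof.
elim: m f => [|m IH] f hf /=.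
  move=> z /eqP/hf [hz|hz].
    by exists 0%N; split => //; lia.
  exists (absz z); split; first lia.
  by apply: Hfrob; lia.
pose g := MkLS (@drop_lo f (m.+1)%:Z).
pose h := mono (co f (m.+1)%:Z) m%:Z.
exists [:: (g, one); (h, t1)]; split.
  split; last split=> //.
    split; last exact: one_omega.
    apply: IH => z; rewrite /g /=; case: ifP => [_|hne]; first by rewrite eqxx. move=> /hf [hz|hz]; [left|right] => //.
    move: hne hz => /negbT; lia.
  split; last exact: t1_omega.
  apply: IH => z; rewrite /h co_mono; case: (eqVneq z m%:Z) => [-> _|_]; [left; lia | by rewrite eqxx].
move=> z.
have -> : ls_sum [:: (g, one); (h, t1)] = ls_add (ls_mul g one) (ls_add (ls_mul h t1) (ls_zero k)) by [].
rewrite !co_add mul_one co_mul_mono /h co_mono /= mulr1 addr0.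
case: (eqVneq z (m.+1)%:Z) => [->|hne].
  by rewrite add0r; have -> : (((m.+1)%:Z - 1 == m%:Z) = true) by lia.
have -> : (z - 1 == m%:Z) = false by apply/negbTE; move: hne; lia.
by rewrite addr0.
Qed.

End Gen.

Lemma sum_delta (N i : nat) (f : nat -> nat) : (1 <= i <= N)%N ->
  (\sum_(1 <= l < N.+1) (l == i) * f l = f i)%N.
Proof.
elim: N => [|N IH] hi; first lia.
rewrite big_nat_recr //=.
case: (eqVneq i N.+1) => [<-|hne].
  rewrite mul1n big1_seq ?add0n // => l; rewrite mem_index_iota => /andP[_ hl].
  by have -> : (l == i) = false by apply/negbTE; lia.
rewrite IH; last lia.
  by rewrite mul0n addn0.
Qed.

Section Sg.
Variables (n : nat) (H : nat -> Prop) (a : nat -> nat).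
Hypothesis hn : (3 <= n)%N.
Hypothesis hgen : forall x : nat, H x <-> exists c : nat -> nat, x = (\sum_(1 <= i < n.+1) c i * a i)%N.
Hypothesis hmin : forall i : nat, (1 <= i <= n)%N ->
     ~ exists c : nat -> nat, c i = 0%N /\ a i = (\sum_(1 <= j < n.+1) c j * a j)%N.
Hypothesis ha1 : a 1%N = n.
Hypothesis hinc : forall i j : nat, (1 <= i)%N -> (i < j)%N -> (j <= n)%N -> (a i < a j)%N.

Lemma ai_ge i : (1 <= i <= n)%N -> (n <= a i)%N.
Proof.
move=> /andP[h1 h2]; case: (eqVneq i 1) => [->|hne]; first by rewrite ha1.
by rewrite -ha1 ltnW // hinc //; lia.
Qed.

Lemma ai_le i : (1 <= i <= n)%N -> (a i <= a n)%N.
Proof.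
move=> /andP[h1 h2]; case: (eqVneq i n) => [->|hne] //.
by rewrite ltnW // hinc //; lia.
Qed.

Lemma sum_lin i q : (1 <= i <= n)%N ->
  (\sum_(1 <= l < n.+1) ((l == i) + (l == 1%N) * q) * a l = a i + q * n)%N.
Proof.
move=> hi.
under eq_bigr do rewrite mulnDl -mulnA.
rewrite big_split /= sum_delta // (@sum_delta _ _ (fun l => q * a l)) ?ha1 //; lia.
Qed.

Lemma H_rep i q : (1 <= i <= n)%N -> H (a i + q * n)%N.
Proof. by move=> hi; apply/hgen; exists (fun l => (l == i) + (l == 1%N) * q)%N; rewrite sum_lin. Qed.

Lemma H_add x y : H x -> H y -> H (x + y)%N.
Proof.
move=> /hgen[c1 ->] /hgen[c2 ->]; apply/hgen; exists (fun l => c1 l + c2 l)%N.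
by rewrite -big_split /=; apply: eq_bigr => l _; rewrite mulnDl.
Qed.

Lemma H_0 : H 0%N.
Proof. by apply/hgen; exists (fun _ => 0%N); rewrite big1. Qed.

Lemma H_small x : H x -> x = 0%N \/ (n <= x)%N.
Proof.
move=> /hgen[c ->]; rewrite big_seq.
pose P := fun x : nat => x = 0%N \/ (n <= x)%N.
apply: (big_ind P); [by left | | ].
  by move=> u v [->|hu] [->|hv]; [left|right|right|right]; lia.
move=> l; rewrite mem_index_iota => /andP[h1 h2]; case: (posnP (c l)) => [->|hc]; first by left.
right; have := ai_ge (i := l); rewrite h1 /= => /(_ h2); nia.
Qed.

Lemma term_le (c : nat -> nat) j : (1 <= j <= n)%N ->
  (c j * a j <= \sum_(1 <= l < n.+1) c l * a l)%N.
Proof.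
move=> hj; rewrite -{1}(@sum_delta _ _ (fun l => c l * a l) hj).
by apply: leq_sum => l _; case: (l == j); rewrite ?mul1n ?mul0n.
Qed.

Lemma notH j : (2 <= j <= n)%N -> ~ H (a j - n)%N.
Proof.
move=> hj /hgen[c hc]; apply: (hmin (i := j)); first lia.
have hjn : (n <= a j)%N by apply: ai_ge; lia.
have cj : c j = 0%N.
  have := term_le c (j := j); rewrite -hc; move=> /(_ ltac:(lia)).
  case: (posnP (c j)) => // hp; nia.
exists (fun l => c l + (l == 1%N))%N; split.
  by rewrite cj; have -> : (j == 1%N) = false by apply/negbTE; lia.
under eq_bigr do rewrite mulnDl.
rewrite big_split /= -hc (@sum_delta _ _ a) ?ha1; lia.
Qed.

Lemma resid_inj i j : (1 <= i)%N -> (i < j)%N -> (j <= n)%N -> a i %% n <> a j %% n.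
Proof.
move=> h1 h2 h3 e.
have hle : (a i <= a j)%N by apply/ltnW/hinc.
have : (n %| a j - a i)%N by rewrite -eqn_mod_dvd // e.
move=> /dvdnP[q hq].
apply: (hmin (i := j)); first lia.
exists (fun l => (l == i) + (l == 1%N) * q)%N; split.
  have -> : (j == i) = false by apply/negbTE; lia.
  by have -> : (j == 1%N) = false by apply/negbTE; lia.
rewrite sum_lin; lia.
Qed.

Lemma resid_surj x : exists i, (1 <= i <= n)%N /\ a i %% n = x %% n.
Proof.
have n0 : (0 < n)%N by lia.
pose f := fun i : 'I_n => Ordinal (ltn_pmod (a i.+1) n0).
have finj : injective f.
  move=> i j /(congr1 val) /= e; apply/val_inj => /=.
  case: (ltngtP i j) => // hij.
    by exfalso; apply: (resid_inj (i := i.+1) (j := j.+1)) => //; apply: ltn_ord.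
  by exfalso; apply: (resid_inj (i := j.+1) (j := i.+1)) => //; apply: ltn_ord.
have [g fK gK] := injF_bij finj.
exists (g (Ordinal (ltn_pmod x n0))).+1; split.
  by have := ltn_ord (g (Ordinal (ltn_pmod x n0))); lia.
by have := congr1 val (gK (Ordinal (ltn_pmod x n0))).
Qed.

Lemma Hres x i : (1 <= i <= n)%N -> a i %% n = x %% n -> (a i <= x)%N -> H x.
Proof.
move=> hi e hle.
have : (n %| x - a i)%N by rewrite -eqn_mod_dvd // e.
move=> /dvdnP[q hq].
have -> : x = (a i + q * n)%N by lia.
exact: H_rep.
Qed.

Lemma frob_an : ~ H (a n - n)%N /\ forall x, (a n - n < x)%N -> H x.
Proof.
split; first by apply: notH; lia.
move=> x hx; have [i [hi e]] := resid_surj x.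
apply: (Hres hi e).
have hai := ai_le hi.
case: (leqP (a i) x) => // hlt; exfalso.
have : (n %| a i - x)%N by rewrite -eqn_mod_dvd ?e //; lia.
move=> /dvdnP[q hq].
case: q hq => [|q] hq; nia.
Qed.

Lemma Fm1_notH : a n = (a n.-1).+1 -> ~ H (a n - n - 1)%N.
Proof.
move=> e; have -> : (a n - n - 1 = a n.-1 - n)%N by lia.
apply: notH; lia.
Qed.

Lemma Fm1_H : a n <> (a n.-1).+1 -> H (a n - n - 1)%N.
Proof.
move=> ne.
have han : (a 1 < a n)%N by apply: hinc; lia.
have [i [hi e]] := resid_surj (a n - 1)%N.
have hai := ai_le hi.
case: (leqP (a i) (a n - n - 1)%N) => hle.
  apply: (Hres hi _ hle).
  rewrite e; have -> : (a n - 1 = 1 * n + (a n - n - 1))%N by lia.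
  by rewrite modnMDl.
exfalso.
have eai : a i = (a n - 1)%N.
  case: (ltngtP (a i) (a n - 1)%N) => // h.
    have : (n %| (a n - 1) - a i)%N by rewrite -eqn_mod_dvd ?e //; lia.
    move=> /dvdnP[q hq]; case: q hq => [|q] hq; nia.
  have hain : a i = a n by lia.
  have : (n %| a n - (a n - 1))%N by rewrite -eqn_mod_dvd; [rewrite -{1}hain e | lia].
  have -> : (a n - (a n - 1) = 1)%N by lia.
  by rewrite dvdn1; lia.
case: (ltngtP i n.-1) => hi2.
- have := hinc (i := i) (j := n.-1); have := hinc (i := n.-1) (j := n); lia.
- have : i = n by lia.
  by move=> ein; rewrite ein in eai; lia.
- by apply: ne; rewrite -hi2; lia.
Qed.

End Sg.

Theorem corollary3p2 (k : fieldType) (n : nat) (H : nat -> Prop) (a : nat -> nat) :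
  (3 <= n)%N ->
  (* H is a numerical semigroup: cofinite *)
  (exists N : nat, forall x : nat, (N <= x)%N -> H x) ->
  (* H is generated by a_1, ..., a_n *)
  (forall x : nat, H x <-> exists c : nat -> nat, x = (\sum_(1 <= i < n.+1) c i * a i)%N) ->
  (* the generators are minimal: no a_i is a combination of the others *)
  (forall i : nat, (1 <= i <= n)%N ->
     ~ exists c : nat -> nat, c i = 0%N /\ a i = (\sum_(1 <= j < n.+1) c j * a j)%N) ->
  (* n = a_1 < a_2 < ... < a_n *)
  a 1%N = n ->
  (forall i j : nat, (1 <= i)%N -> (i < j)%N -> (j <= n)%N -> (a i < a j)%N) ->
  (min_can_conductor k H <-> a n = (a n.-1).+1).
Proof.
Local Open Scope ring_scope.
move=> hn _ hgen hmin ha1 hinc.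
have [nHF Hfr] : ~ H (a n - n)%N /\ forall x, (a n - n < x)%N -> H x by apply: frob_an.
have H0 : H 0%N by apply: H_0.
have Hsm : forall x, H x -> x = 0%N \/ (n <= x)%N by move=> x; apply: H_small.
have Hadd : forall x y, H x -> H y -> H (x + y)%N by move=> x y; apply: H_add.
have han : (a 1 < a n)%N by apply: hinc; lia.
set F := (a n - n)%N in nHF Hfr *.
have F1 : (1 <= F)%N by rewrite /F; lia.
have PKnn : forall z, inK H F z -> (0 <= z)%R.
  move=> z hK; case: (lerP 0 z) => // hz; exfalso; apply: hK.
  exists (F + absz z)%N; split; first lia.
  by apply: Hfr; lia.
have Pnn_add : forall u v : int, (0 <= u)%R -> (0 <= v)%R -> (0 <= u + v)%R by move=> u v; lia.
have Pnn_H : forall h, H h -> (0 <= h%:Z)%R by [].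
have Bsub : forall y : LS k, inB H F y -> inRbar y.
  move=> y hy z /eqP hz; exact: (B_supp H0 nHF Pnn_add Pnn_H PKnn hy hz).
split.
- move=> hmc; case: (eqVneq (a n) (a n.-1).+1) => // ne; exfalso.
  have hF1 : H (F - 1)%N := Fm1_H hn hgen hmin ha1 hinc (elimN eqP ne).
  have hmcF := hmc F (conj nHF Hfr).
  pose x := mono (1 : k) (F - 1)%N%:Z.
  have hxsupp : forall z, co x z != 0%R -> z = (F - 1)%N%:Z.
    move=> z; rewrite co_mono; case: (eqVneq z (F - 1)%N%:Z) => // _; by rewrite eqxx.
  have hb : in_b H F x.
    split.
      exists 0%N => y hy z /eqP /co_mul_supp [i [j [-> [/hxsupp -> /eqP hj]]]].
      have [h [-> hh]] := hy j hj.
      by exists (F - 1 + h)%N; split; [lia | apply: Hadd].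
    move=> y hy z /eqP /co_mul_supp [i [j [-> [/hxsupp -> /eqP hj]]]].
    pose P := fun j : int => exists h : nat, j = h%:Z /\ h <> 1%N.
    have PP : P j.
      apply: (B_supp H0 nHF (P := P) _ _ _ hy (introN eqP hj)).
      + by move=> u v [h1 [-> e1]] [h2 [-> e2]]; exists (h1 + h2)%N; split; [lia|lia].
      + by move=> h hh; exists h; split => //; have := Hsm h hh; lia.
      + move=> u hu; have := PKnn u hu => u0; exists (absz u); split; first lia.
        move=> e1; apply: hu; exists (F - 1)%N; split => //; lia.
    case: PP => h [-> h1].
    case: (posnP h) => [h0|hpos].
      by exists (F - 1)%N; split => //; rewrite h0; lia.
    by exists (F - 1 + h)%N; split; [lia | apply: Hfr; lia].
  have [_ hxc] := (hmcF x).1 hb.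
  have ht1 : inRbar (t1 k) by move=> z; rewrite co_mono; case: eqP => // -> _.
  have := hxc _ ht1 (F%:Z); rewrite co_mul_mono /x co_mono.
  have -> : ((F%:Z - 1)%R == (F - 1)%N%:Z) = true by lia.
  rewrite mulr1 => /(_ (elimN eqP (oner_neq0 k))) [h [e hh]].
  by apply: nHF; have -> : F = h by lia.
- move=> e F' [nHF' Hfr'] x.
  have eF : F' = F.
    case: (ltngtP F' F) => // h; exfalso; [apply: nHF; exact: Hfr' | apply: nHF'; exact: Hfr].
  subst F'.
  have K1 : inK H F 1%R.
    move=> [h [eh hh]]; apply: (Fm1_notH hn hgen hmin ha1 hinc e).
    by have -> : (a n - n - 1)%N = h by rewrite -/F; lia.
  have Bbar : forall y : LS k, inRbar y -> inB H F y.
    move=> y hy; exists F => w hw.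
    apply: (build H0 nHF Hfr K1) => z /co_mul_supp [i [j [-> [/eqP hi /eqP hj]]]].
    have := hy i hi; have := pow_supp Pnn_add Pnn_H PKnn hw (introN eqP hj).
    case: (lerP (i + j) F%:Z); [left | right] => //; lia.
  split.
  + move=> [hB hbR]; split; first exact: Bsub.
    by move=> y hy; apply: hbR; apply: Bbar.
  + move=> [hxbar hxc]; split.
      exists 0%N => y hy; apply: hxc.
      by move=> z /hy [h [-> _]].
    by move=> y hy; apply: hxc; apply: Bsub.
Qed.
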